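(* Let $L\in\mathcal{N}$ and assume that $L$ is isomorphic to a sublattice of a free lattice. Assume that $K$ is a sublattice of $L$ and $a\in L$ is an element such that $a\parallel b$ for all $b\in K$. Then $$\mathrm{Dec}(K)\le \bigl|\{a\vee b: b\in K\}\times\{a\wedge b: b\in K\}\bigr|.$$
   Context: $\mathcal{N}$ denotes the variety of lattices generated by the pentagon $N_5$. For elements $x,y$, $x\parallel y$ means neither $x\le y$ nor $y\le x$. A subset $S$ of a lattice $K$ is convex if $x,z\in S$, $y\in K$, $x\le y\le z$ imply $y\in S$; a convex distributive sublattice of $K$ is a sublattice of $K$ that is convex and is a distributive lattice. A set partition $\mathcal{F}$ of the set of elements of $K$ is called distributive if every $F\in\mathcal{F}$ is a convex distributive sublattice of $K$, and for all distinct $F_1,F_2\in\mathcal{F}$, either $F_1\cup F_2$ is not a sublattice of $K$, or $F_1\cup F_2$ is not a convex subset of $K$, or $F_1\cup F_2$ is a convex distributive sublattice of $K$. $\mathrm{Dec}(K)$ is the minimum cardinality of a distributive partition of $K$. *)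

(* Defs.v *)
From HB Require Import structures.
From mathcomp Require Import all_boot all_order.
Set Implicit Arguments. Unset Strict Implicit. Unset Printing Implicit Defensive.
Import Order.TTheory.
Local Open Scope order_scope.

Inductive lterm (X : Type) : Type :=
  | LVar of X
  | LJoin of lterm X & lterm X
  | LMeet of lterm X & lterm X.

Fixpoint teval (X T : Type) (j m : T -> T -> T) (v : X -> T) (t : lterm X) : T :=
  match t with
  | LVar x => v x
  | LJoin t1 t2 => j (teval j m v t1) (teval j m v t2)
  | LMeet t1 t2 => m (teval j m v t1) (teval j m v t2)
  end.

Definition lat_eval (d : Order.disp_t) (M : latticeType d) (X : Type)
  (v : X -> M) (t : lterm X) : M := teval (@Order.join d M) (@Order.meet d M) v t.

Inductive n5 : Type := N0 | Na | Nb | Nc | N1.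

Definition n5_le (x y : n5) : bool :=
  match x, y with
  | N0, _ => true
  | _, N1 => true
  | Na, Na | Na, Nc => true
  | Nb, Nb => true
  | Nc, Nc => true
  | _, _ => false
  end.

Definition n5_join (x y : n5) : n5 :=
  if n5_le x y then y else if n5_le y x then x else N1.
Definition n5_meet (x y : n5) : n5 :=
  if n5_le x y then x else if n5_le y x then y else N0.

(* L belongs to the variety N generated by N5: L satisfies every lattice
   identity (in countably many variables) that holds in N5. *)
Definition in_variety_N (d : Order.disp_t) (L : latticeType d) : Prop :=
  forall t s : lterm nat,
    (forall v : nat -> n5, teval n5_join n5_meet v t = teval n5_join n5_meet v s) ->
    forall v : nat -> L, lat_eval v t = lat_eval v s.

(* Two terms over X are equal in the free lattice FL(X) iff the identity
   t = s holds in every lattice. *)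
Definition free_eq (X : Type) (t s : lterm X) : Prop :=
  forall (d : Order.disp_t) (M : latticeType d) (v : X -> M),
    lat_eval v t = lat_eval v s.

(* L is isomorphic to a sublattice of a free lattice FL(X): there is an
   injective lattice homomorphism L -> FL(X) (FL(X) = terms modulo free_eq). *)
Definition embeds_in_free_lattice (d : Order.disp_t) (L : latticeType d) : Prop :=
  exists (X : Type) (f : L -> lterm X),
    [/\ forall x y : L, free_eq (f (x `|` y)) (LJoin (f x) (f y)),
        forall x y : L, free_eq (f (x `&` y)) (LMeet (f x) (f y)) &
        forall x y : L, free_eq (f x) (f y) -> x = y].

Section Sub.
Context (d : Order.disp_t) (L : latticeType d).

Definition is_sublattice (S : L -> Prop) : Prop :=
  forall x y, S x -> S y -> S (x `|` y) /\ S (x `&` y).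

Definition is_convex_in (K S : L -> Prop) : Prop :=
  forall x y z, S x -> S z -> K y -> x <= y -> y <= z -> S y.

Definition is_distributive_set (S : L -> Prop) : Prop :=
  forall x y z, S x -> S y -> S z -> x `&` (y `|` z) = (x `&` y) `|` (x `&` z).

Definition convex_distributive_sublattice (K S : L -> Prop) : Prop :=
  [/\ (forall x, S x -> K x), is_sublattice S, is_convex_in K S &
      is_distributive_set S].

Definition distributive_partition (K : L -> Prop) (F : (L -> Prop) -> Prop) : Prop :=
  [/\
      (forall B, F B -> exists x, B x),
      (forall B1 B2 x, F B1 -> F B2 -> B1 x -> B2 x -> B1 = B2),
      (forall x, K x -> exists2 B, F B & B x),
      (forall B, F B -> convex_distributive_sublattice K B) &
      (forall B1 B2, F B1 -> F B2 -> B1 <> B2 ->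
         let U := fun x => B1 x \/ B2 x in
         is_sublattice U -> is_convex_in K U ->
         convex_distributive_sublattice K U)].

(* Dec(K) <= |S| for a set S : A -> Prop: some distributive partition of K
   admits an injection of its set of blocks into S. *)
Definition Dec_le (A : Type) (K : L -> Prop) (S : A -> Prop) : Prop :=
  exists (F : (L -> Prop) -> Prop) (g : (L -> Prop) -> A),
    [/\ distributive_partition K F,
        (forall B, F B -> S (g B)) &
        (forall B1 B2, F B1 -> F B2 -> g B1 = g B2 -> B1 = B2)].

End Sub.

(* Main.v *)
Require Import Defs.
From HB Require Import structures.
From mathcomp Require Import all_boot all_order.
From Stdlib Require Import ClassicalEpsilon.
Import Order.TTheory.
Local Open Scope order_scope.

Section S.
Context (d : Order.disp_t) (L : latticeType d) (HN : in_variety_N L).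

Definition v4 (x y z a : L) : nat -> L := fun n =>
  match n with 0 => x | 1 => y | 2 => z | _ => a end.

Notation X := (LVar 0). Notation Y := (LVar 1). Notation Z := (LVar 2). Notation A := (LVar 3).

Lemma SDm (y z a : L) : a `&` (y `|` z) = a `&` (y `|` (a `&` (z `|` (a `&` y)))).
Proof.
refine (HN (LMeet A (LJoin Y Z)) (LMeet A (LJoin Y (LMeet A (LJoin Z (LMeet A Y))))) _ (v4 a y z a)).
by move=> v /=; case: (v 1); case: (v 2); case: (v 3); reflexivity.
Qed.

Lemma SDj (y z a : L) : a `|` (y `&` z) = a `|` (y `&` (a `|` (z `&` (a `|` y)))).
Proof.
refine (HN (LJoin A (LMeet Y Z)) (LJoin A (LMeet Y (LJoin A (LMeet Z (LJoin A Y))))) _ (v4 a y z a)).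
by move=> v /=; case: (v 1); case: (v 2); case: (v 3); reflexivity.
Qed.

Notation LHS := (LMeet X (LJoin Y Z)).
Notation DD := (LJoin (LMeet X Y) (LMeet X Z)).

Lemma I1 (x y z a : L) : x `&` (y `|` z) `&` ((x `&` y) `|` a) <=
   ((x `&` y) `|` (x `&` z)) `|` ((x `|` z) `&` a).
Proof.
apply/meet_idPl.
refine (HN (LMeet (LMeet LHS (LJoin (LMeet X Y) A)) (LJoin DD (LMeet (LJoin X Z) A)))
           (LMeet LHS (LJoin (LMeet X Y) A)) _ (v4 x y z a)).
by move=> v /=; case: (v 0); case: (v 1); case: (v 2); case: (v 3); reflexivity.
Qed.

Lemma I2 (x y z a : L) : x `&` (y `|` z) `&` ((x `&` z) `|` a) <=
   ((x `&` y) `|` (x `&` z)) `|` ((x `|` y) `&` a).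
Proof.
apply/meet_idPl.
refine (HN (LMeet (LMeet LHS (LJoin (LMeet X Z) A)) (LJoin DD (LMeet (LJoin X Y) A)))
           (LMeet LHS (LJoin (LMeet X Z) A)) _ (v4 x y z a)).
by move=> v /=; case: (v 0); case: (v 1); case: (v 2); case: (v 3); reflexivity.
Qed.

Lemma I3 (x y z a : L) : x `&` (y `|` z) `&` ((y `&` z) `|` a) <=
   ((x `&` y) `|` (x `&` z)) `|` (x `&` a).
Proof.
apply/meet_idPl.
refine (HN (LMeet (LMeet LHS (LJoin (LMeet Y Z) A)) (LJoin DD (LMeet X A)))
           (LMeet LHS (LJoin (LMeet Y Z) A)) _ (v4 x y z a)).
by move=> v /=; case: (v 0); case: (v 1); case: (v 2); case: (v 3); reflexivity.
Qed.

Lemma I4 (x y z a : L) : x `&` (y `|` z) `&` ((x `&` y) `|` a) <=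
   ((x `&` y) `|` (x `&` z)) `|` ((y `|` z) `&` a).
Proof.
apply/meet_idPl.
refine (HN (LMeet (LMeet LHS (LJoin (LMeet X Y) A)) (LJoin DD (LMeet (LJoin Y Z) A)))
           (LMeet LHS (LJoin (LMeet X Y) A)) _ (v4 x y z a)).
by move=> v /=; case: (v 0); case: (v 1); case: (v 2); case: (v 3); reflexivity.
Qed.


Lemma use_id (a x y z W V : L) :
  x `&` (y `|` z) `&` (W `|` a) <= ((x `&` y) `|` (x `&` z)) `|` (V `&` a) ->
  a `|` (x `&` (y `|` z)) <= a `|` W ->
  a `&` V <= a `&` ((x `&` y) `|` (x `&` z)) ->
  x `&` (y `|` z) <= (x `&` y) `|` (x `&` z).
Proof.
move=> H1 H2 H3.
have e1 : x `&` (y `|` z) `&` (W `|` a) = x `&` (y `|` z).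
  apply/meet_idPl; rewrite [W `|` a]joinC; exact: le_trans (leUr _ _) H2.
have e2 : ((x `&` y) `|` (x `&` z)) `|` (V `&` a) = (x `&` y) `|` (x `&` z).
  apply/join_idPl; rewrite [V `&` a]meetC; exact: le_trans H3 (leIr _ _).
by rewrite -e1 -[X in _ <= X]e2.
Qed.

Lemma distr_gen (a : L) (U : L -> Prop) (u1 u2 l1 l2 : L) (cls : L -> bool) :
  u1 <= u2 -> l1 <= l2 -> is_sublattice U ->
  (forall w, U w -> a `|` w = if cls w then u2 else u1) ->
  (forall w, U w -> a `&` w = if cls w then l2 else l1) ->
  (forall w w', U w -> U w' -> cls (w `|` w') = cls w || cls w') ->
  (forall w w', U w -> U w' -> cls (w `&` w') = cls w && cls w') ->
  is_distributive_set U.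
Proof.
move=> hu hl hU hj hm cj cm x y z Ux Uy Uz.
have Uxy := (hU _ _ Ux Uy).2. have Uxz := (hU _ _ Ux Uz).2.
have Uyz := (hU _ _ Uy Uz).2. have Uyz' := (hU _ _ Uy Uz).1.
have Uxy' := (hU _ _ Ux Uy).1. have Uxz' := (hU _ _ Ux Uz).1.
have UL := (hU _ _ Ux Uyz').2. have UD := (hU _ _ Uxy Uxz).1.
apply/le_anti/andP; split; last first.
  rewrite leUx !lexI leIl leIl /=.
  by rewrite (le_trans (leIr _ _) (leUl _ _)) (le_trans (leIr _ _) (leUr _ _)).
have eL := hj _ UL. rewrite (cm _ _ Ux Uyz') (cj _ _ Uy Uz) in eL.
have eD := hm _ UD. rewrite (cj _ _ Uxy Uxz) (cm _ _ Ux Uy) (cm _ _ Ux Uz) in eD.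
have exy := hj _ Uxy. rewrite (cm _ _ Ux Uy) in exy.
have exz := hj _ Uxz. rewrite (cm _ _ Ux Uz) in exz.
have eyz := hj _ Uyz. rewrite (cm _ _ Uy Uz) in eyz.
have fxz := hm _ Uxz'. rewrite (cj _ _ Ux Uz) in fxz.
have fxy := hm _ Uxy'. rewrite (cj _ _ Ux Uy) in fxy.
have fyz := hm _ Uyz'. rewrite (cj _ _ Uy Uz) in fyz.
have fx := hm _ Ux.
move: eL eD exy exz eyz fxz fxy fyz fx.
case: (cls x); case: (cls y); case: (cls z) => /= eL eD exy exz eyz fxz fxy fyz fx;
first [ by apply: (@use_id a x y z _ _ (I1 x y z a)); [rewrite eL exy | rewrite fxz eD]; rewrite ?lexx
      | by apply: (@use_id a x y z _ _ (I2 x y z a)); [rewrite eL exz | rewrite fxy eD]; rewrite ?lexx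
      | by apply: (@use_id a x y z _ _ (I3 x y z a)); [rewrite eL eyz | rewrite fx eD]; rewrite ?lexx
      | by apply: (@use_id a x y z _ _ (I4 x y z a)); [rewrite eL exy | rewrite fyz eD]; rewrite ?lexx ].
Qed.


Definition phi (a b : L) : L * L := (a `|` b, a `&` b).

Lemma phiJ (a x y : L) : phi a x = phi a y -> phi a (x `|` y) = phi a x.
Proof.
case=> e1 e2; rewrite /phi; congr (_, _).
  by rewrite joinA e1 -joinA joinxx.
by rewrite (SDm x y a) e2 meetKUC -e2 meetKUC.
Qed.

Lemma phiM (a x y : L) : phi a x = phi a y -> phi a (x `&` y) = phi a x.
Proof.
case=> e1 e2; rewrite /phi; congr (_, _).
  by rewrite (SDj x y a) e1 joinKIC -e1 joinKIC.
by rewrite meetA e2 -meetA meetxx.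
Qed.

Lemma phi_le (a x y : L) : x <= y -> (phi a x).1 <= (phi a y).1 /\ (phi a x).2 <= (phi a y).2.
Proof. by move=> h; split; [apply: leU2 | apply: leI2]. Qed.

Lemma pair_anti (p q : L * L) : p.1 <= q.1 -> p.2 <= q.2 -> q.1 <= p.1 -> q.2 <= p.2 -> p = q.
Proof.
case: p q => [p1 p2] [q1 q2] /= h1 h2 h3 h4.
by rewrite (@le_anti _ _ p1 q1) ?h1 ?h3 // (@le_anti _ _ p2 q2) ?h2 ?h4.
Qed.

Lemma fib_distr (a : L) (U : L -> Prop) (p1 p2 : L * L) :
  p1.1 <= p2.1 -> p1.2 <= p2.2 -> is_sublattice U ->
  (forall w, U w -> phi a w = p1 \/ phi a w = p2) -> is_distributive_set U.
Proof.
move=> h1 h2 hU hw.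
pose cls w := phi a w == p2.
have phiE : forall w, U w -> phi a w = if cls w then p2 else p1.
  move=> w /hw [] e; rewrite /cls e ?eqxx //; by case: eqP.
have up : forall v v', U v -> U v' -> v <= v' -> cls v -> cls v'.
  move=> v v' Uv Uv' hle cv.
  have := phiE _ Uv'; case: ifP => // hc e'.
  have ev := phiE _ Uv; rewrite cv in ev.
  have [l1 l2] := @phi_le a v v' hle. rewrite ev e' in l1 l2.
  have e2 : phi a v' = p2 by rewrite e'; apply: pair_anti.
  by move: hc; rewrite /cls /= e2 eqxx.
have down : forall v v', U v -> U v' -> v <= v' -> ~~ cls v' -> ~~ cls v.
  move=> v v' Uv Uv' hle; apply: contra; exact: up.
apply: (@distr_gen a U p1.1 p2.1 p1.2 p2.2 cls) => //.
- by move=> w Uw; have := congr1 fst (phiE _ Uw); case: (cls w).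
- by move=> w Uw; have := congr1 snd (phiE _ Uw); case: (cls w).
- move=> w w' Uw Uw'; have Uj := (hU _ _ Uw Uw').1.
  case hcw: (cls w); first by rewrite (up w) ?leUl.
  case hcw': (cls w'); first by rewrite (up w') ?leUr.
  have e : phi a w = phi a w' by rewrite !phiE ?hcw ?hcw'.
  have : cls (w `|` w') = cls w by rewrite /cls (@phiJ a w w' e).
  by rewrite hcw.
- move=> w w' Uw Uw'; have Um := (hU _ _ Uw Uw').2.
  case hcw: (cls w); last by apply/negbTE/(down _ w) => //; rewrite ?leIl ?hcw.
  case hcw': (cls w'); last by apply/negbTE/(down _ w') => //; rewrite ?leIr ?hcw'.
  have e : phi a w = phi a w' by rewrite !phiE ?hcw ?hcw'.
  have : cls (w `&` w') = cls w by rewrite /cls (@phiM a w w' e).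
  by rewrite hcw.
Qed.

End S.
Arguments phi {d L}.

Theorem theorem5p2 (d : Order.disp_t) (L : latticeType d)
  (HN : in_variety_N L) (Hfree : embeds_in_free_lattice L)
  (K : L -> Prop) (HK : is_sublattice K) (a : L)
  (Ha : forall b, K b -> ~~ (a >=< b)) :
  Dec_le K (fun p : L * L =>
              (exists2 b, K b & p.1 = a `|` b) /\ (exists2 b, K b & p.2 = a `&` b)).
Proof.
pose fib (p : L * L) := fun x => K x /\ phi a x = p.
pose F := fun B => exists2 b, K b & B = fib (phi a b).
have inh : inhabited (L * L) := inhabits (a, a).
pose g := fun B => epsilon inh (fun p => (exists2 b, K b & p = phi a b) /\ B = fib p).
have gP : forall B, F B -> (exists2 b, K b & g B = phi a b) /\ B = fib (g B).
  move=> B [b Kb eB]; rewrite /g; apply: (epsilon_spec inh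
     (fun p => (exists2 b, K b & p = phi a b) /\ B = fib p)).
  by exists (phi a b); split => //; exists b.
have subl : forall p, is_sublattice (fib p).
  move=> p x y [Kx ex] [Ky ey].
  have e : phi a x = phi a y by rewrite ex ey.
  split; split.
  - exact: (HK _ _ Kx Ky).1.
  - by rewrite (@phiJ d L HN a x y e).
  - exact: (HK _ _ Kx Ky).2.
  - by rewrite (@phiM d L HN a x y e).
have blockP : forall b, K b -> convex_distributive_sublattice K (fib (phi a b)).
  move=> b Kb; split.
  - by move=> x [].
  - exact: subl.
  - move=> x y z [Kx ex] [Kz ez] Ky hxy hyz; split=> //.
    have [a1 a2] := @phi_le d L a x y hxy; have [b1 b2] := @phi_le d L a y z hyz.
    rewrite ex in a1 a2; rewrite ez in b1 b2; exact: pair_anti.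
  - apply: (@fib_distr d L HN a _ (phi a b) (phi a b)) => //.
    all: try exact: subl.
    all: try by move=> w [_ ->]; left.
exists F, g; split.
- split.
  + by move=> B [b Kb ->]; exists b.
  + by move=> B1 B2 x [b1 _ ->] [b2 _ ->] [_ e1] [_ e2]; rewrite -e1 -e2.
  + by move=> x Kx; exists (fib (phi a x)); [exists x | split].
  + by move=> B [b Kb ->]; apply: blockP.
  + move=> B1 B2 [b1 Kb1 ->] [b2 Kb2 ->] _ U hUs hUc.
    split => //.
    * by move=> x [[]|[]].
    * have Ub : U (b1 `|` b2).
        apply: (hUs _ _ _ _).1; [by left | by right].
      have [m1 m2] := @phi_le d L a b1 (b1 `|` b2) (leUl _ _).
      have [n1 n2] := @phi_le d L a b2 (b1 `|` b2) (leUr _ _).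
      case: Ub => -[_ e].
      - rewrite e in n1 n2.
        apply: (@fib_distr d L HN a U (phi a b2) (phi a b1)) => //.
        by move=> w [[_ ->]|[_ ->]]; [right | left].
      - rewrite e in m1 m2.
        apply: (@fib_distr d L HN a U (phi a b1) (phi a b2)) => //.
        by move=> w [[_ ->]|[_ ->]]; [left | right].
- by move=> B /gP [[b Kb ->] _]; split; exists b.
- by move=> B1 B2 /gP [_ e1] /gP [_ e2] eg; rewrite e1 e2 eg.
Qed.
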